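(* Let $R$ be an NC-nilpotent algebra, $\overline S\subset R_{ab}-\{0\}$ a multiplicative subset, and $S=\pi^{-1}(\overline S)\subset R$ its preimage under the abelianization map $\pi:R\to R_{ab}$. Then the Ore localization $R[S^{-1}]$ is NC-nilpotent, and for every $d\ge0$ $$\mathrm{gr}^d_F(R[S^{-1}])\cong \mathrm{gr}^d_F(R)[\overline S^{-1}],$$ where on the right is the usual module of fractions of the $R_{ab}$-module $\mathrm{gr}^d_F(R)$.
   Context: Algebras are associative unital $\mathbf{C}$-algebras. $R_{ab}=R/[R,R]$. NC-filtration: with $R^{\rm Lie}_1=R$, $R^{\rm Lie}_m=[R,R^{\rm Lie}_{m-1}]$ ($[a,b]=ab-ba$), $F^dR=\sum_m\sum_{i_1+\dots+i_m-m=d}R\,R^{\rm Lie}_{i_1}R\cdots R\,R^{\rm Lie}_{i_m}R$; $\mathrm{gr}^d_F R=F^dR/F^{d+1}R$, which is a module over $\mathrm{gr}^0_FR=R_{ab}$. $R$ is NC-nilpotent if $F^iR=0$ for $i\gg0$. For $R$ NC-nilpotent, the set $S$ satisfies the left and right Ore conditions, so the ring of fractions $R[S^{-1}]$ exists: it is equipped with a homomorphism $R\to R[S^{-1}]$ sending elements of $S$ to invertible elements and is universal with this property. *)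

(* Defs.v *)
From HB Require Import structures.
From mathcomp Require Import all_boot all_order all_algebra.
From mathcomp Require Import complex Rstruct.

Set Implicit Arguments.
Unset Strict Implicit.
Unset Printing Implicit Defensive.

Import GRing.Theory.
Local Open Scope ring_scope.

Definition CC : fieldType := complex Rdefinitions.R.

Section NCFiltration.
Variable A : algType CC.

(* R^Lie_m : R^Lie_1 = R, R^Lie_{m+1} = [R, R^Lie_m] (linear span of the
   commutators [a, b] = ab - ba with a in R, b in R^Lie_m).  Since
   c [a,b] = [c a, b] and -[a,b] = [-a,b], the additive span is the linear
   span. *)
Inductive lie_term : nat -> A -> Prop :=
  | lie_one (a : A) : lie_term 1 a
  | lie_comm m (a b : A) : lie_term m.+1 b -> lie_term m.+2 (a * b - b * a)
  | lie_zero m : lie_term m 0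
  | lie_add m (x y : A) : lie_term m x -> lie_term m y -> lie_term m (x + y).

Definition nc_word (a0 : A) (s : seq (nat * A * A)) : A :=
  foldl (fun acc t => acc * t.1.2 * t.2) a0 s.

(* Generators of F^d R : elements of R R^Lie_{i1} R ... R R^Lie_{im} R
   with m >= 1, all i_j >= 1 and i1 + ... + im - m = d. *)
Definition nc_gen (d : nat) (y : A) : Prop :=
  exists (a0 : A) (s : seq (nat * A * A)),
    [/\ s <> [::],
        (forall t, List.In t s -> (0 < t.1.1)%N /\ lie_term t.1.1 t.1.2),
        (\sum_(t <- s) t.1.1)%N = (d + size s)%N
      & y = nc_word a0 s].

(* F^d R : the linear span of the generators (products with elements of R
   absorb scalars, so the additive span is the linear span). *)
Inductive ncF (d : nat) : A -> Prop :=
  | ncF_gen y : nc_gen d y -> ncF d y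
  | ncF_zero : ncF d 0
  | ncF_add x y : ncF d x -> ncF d y -> ncF d (x + y).

Definition NC_nilpotent : Prop :=
  exists n : nat, forall i : nat, (n <= i)%N -> forall x : A, ncF i x -> x = 0.

Definition invertible (x : A) : Prop := exists y : A, x * y = 1 /\ y * x = 1.

(* S is the preimage pi^{-1}(Sbar) under pi : R -> R_ab = R / F^1 R of a
   multiplicative subset Sbar of R_ab - {0}:  S is a union of cosets of
   [R,R] = F^1 R, contains 1, is closed under products, and avoids F^1 R
   (i.e. pi(s) <> 0). *)
Definition preimage_of_mult_subset_ab (S : A -> Prop) : Prop :=
  [/\ forall x y : A, S x -> ncF 1 (x - y) -> S y,
      S 1,
      forall x y : A, S x -> S y -> S (x * y)
    & forall x : A, S x -> ~ ncF 1 x].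

End NCFiltration.

Definition is_ring_of_fractions (A B : algType CC) (S : A -> Prop)
    (iota : {lrmorphism A -> B}) : Prop :=
  (forall s, S s -> invertible (iota s)) /\
  (forall (T : algType CC) (g : {lrmorphism A -> T}),
     (forall s, S s -> invertible (g s)) ->
     (exists h : {lrmorphism B -> T}, forall a, h (iota a) = g a) /\
     (forall h1 h2 : {lrmorphism B -> T},
        (forall a, h1 (iota a) = g a) -> (forall a, h2 (iota a) = g a) ->
        forall b, h1 b = h2 b)).

(* gr^d_F(A)[Sbar^{-1}] is presented by pairs (m, s) with m in F^d A
   (representing the class of m in gr^d = F^d/F^{d+1}) and s in S (a lift of
   an element of Sbar); two pairs are equal iff
   t (s' m - s m') = 0 in gr^d for some t in Sbar.  (R_ab acts on gr^d by
   left multiplication of lifts.)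
   gr^d_F(B) is presented by elements of F^d B modulo F^{d+1} B, an R_ab-module
   through iota.  The following says that phi : (m, s) |-> phi m s induces an
   isomorphism of R_ab-modules  gr^d_F(A)[Sbar^{-1}] ~= gr^d_F(B). *)
Definition frac_gr_iso (A B : algType CC) (S : A -> Prop)
    (iota : {lrmorphism A -> B}) (d : nat) (phi : A -> A -> B) : Prop :=
  let frac_eq (m s m' s' : A) :=
    exists t, S t /\ ncF (d.+1) (t * (s' * m - s * m')) in
  [/\
      forall m s, ncF d m -> S s -> ncF d (phi m s),
      (* well defined and injective on classes *)
      forall m s m' s', ncF d m -> S s -> ncF d m' -> S s' ->
        (frac_eq m s m' s' <-> ncF (d.+1) (phi m s - phi m' s')),
      forall y : B, ncF d y ->
        exists m s, [/\ ncF d m, S s & ncF (d.+1) (phi m s - y)],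
      (* additive: m/s + m'/s' = (s' m + s m')/(s s') *)
      forall m s m' s', ncF d m -> S s -> ncF d m' -> S s' ->
        ncF (d.+1) (phi (s' * m + s * m') (s * s') - (phi m s + phi m' s'))
    &
      forall r m s, ncF d m -> S s ->
        ncF (d.+1) (phi (r * m) s - iota r * phi m s)].

(* Main.v *)
Require Import Defs.
From HB Require Import structures.
From mathcomp Require Import all_boot all_order all_algebra.
From mathcomp Require Import complex Rstruct.
From mathcomp Require Import zify boolp.
Set Implicit Arguments.
Unset Strict Implicit.
Unset Printing Implicit Defensive.
Import GRing.Theory.
Local Open Scope ring_scope.


Section Filt.
Variable A : algType CC.
Implicit Types (x y r a : A) (s : seq (nat * A * A)).

Definition valid s := forall t, List.In t s -> (0 < t.1.1)%N /\ lie_term t.1.1 t.1.2.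

Lemma word_rcons a0 s t : nc_word a0 (rcons s t) = nc_word a0 s * t.1.2 * t.2.
Proof. by rewrite /nc_word foldl_rcons. Qed.

Lemma wordMl r a0 s : nc_word (r * a0) s = r * nc_word a0 s.
Proof.
elim: s r a0 => [|t s IH] r a0 //=.
by rewrite /nc_word /= -!mulrA -IH !mulrA.
Qed.

Lemma F_word_gen d a0 s : s <> [::] -> valid s ->
  (\sum_(t <- s) t.1.1)%N = (d + size s)%N -> ncF d (nc_word a0 s).
Proof. by move=> ne v e; apply: ncF_gen; exists a0, s. Qed.

Lemma F_opp d x : ncF d x -> ncF d (- x).
Proof.
elim=> [y [a0 [s [ne v e ->]]]| |u w _ Hu _ Hw].
- by rewrite -mulN1r -wordMl; apply: F_word_gen.
- by rewrite oppr0; apply: ncF_zero.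
- by rewrite opprD; apply: ncF_add.
Qed.

Lemma F_mull d r x : ncF d x -> ncF d (r * x).
Proof.
elim=> [y [a0 [s [ne v e ->]]]| |u w _ Hu _ Hw].
- by rewrite -wordMl; apply: F_word_gen.
- by rewrite mulr0; apply: ncF_zero.
- by rewrite mulrDr; apply: ncF_add.
Qed.

Lemma valid_rcons s t : valid (rcons s t) <-> valid s /\ (0 < t.1.1)%N /\ lie_term t.1.1 t.1.2.
Proof.
rewrite /valid -cats1; split.
- move=> H; split; first by move=> u hu; apply: H; apply/List.in_app_iff; left.
  by apply: H; apply/List.in_app_iff; right; left.
- move=> [H1 H2] u /List.in_app_iff [hu|[<-|[]]]; first exact: H1.
  exact: H2.
Qed.

Lemma sum_rcons s t : (\sum_(u <- rcons s t) u.1.1 = \sum_(u <- s) u.1.1 + t.1.1)%N.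
Proof. by rewrite big_rcons. Qed.

Lemma F_mulr d r x : ncF d x -> ncF d (x * r).
Proof.
elim=> [y [a0 [s [ne v e ->]]]| |u w _ Hu _ Hw].
- case/lastP: s ne v e => [//|s t] _ v e.
  have -> : nc_word a0 (rcons s t) * r = nc_word a0 (rcons s (t.1, t.2 * r)).
    by rewrite !word_rcons /= !mulrA.
  apply: F_word_gen; first by case: (s).
  + by move: v => /valid_rcons [v1 v2]; apply/valid_rcons.
  + by move: e; rewrite !sum_rcons !size_rcons.
- by rewrite mul0r; apply: ncF_zero.
- by rewrite mulrDl; apply: ncF_add.
Qed.

Lemma F_sub d x y : ncF d x -> ncF d y -> ncF d (x - y).
Proof. by move=> hx hy; apply: ncF_add => //; apply: F_opp. Qed.

Lemma F_scale d k x : ncF d x -> ncF d (k *: x).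
Proof. by move=> hx; rewrite -[x]mul1r scalerAl; apply: F_mull. Qed.

Lemma F_mul p q x y : ncF p x -> ncF q y -> ncF (p + q) (x * y).
Proof.
move=> hx; elim=> [y' [b0 [s2 [ne2 v2 e2 ->]]]| |u w _ Hu _ Hw]; last first.
- by rewrite mulrDr; apply: ncF_add.
- by rewrite mulr0; apply: ncF_zero.
elim: hx => [x' [a0 [s1 [ne1 v1 e1 ->]]]| |u w _ Hu _ Hw]; last first.
- by rewrite mulrDl; apply: ncF_add.
- by rewrite mul0r; apply: ncF_zero.
case/lastP: s1 ne1 v1 e1 => [//|s1 t] _ v1 e1.
have -> : nc_word a0 (rcons s1 t) * nc_word b0 s2 =
          nc_word a0 (rcons s1 (t.1, t.2 * b0) ++ s2).
  rewrite /nc_word foldl_cat -!/(nc_word _ _) -wordMl.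
  by rewrite !word_rcons /= !mulrA.
apply: F_word_gen; first by case: (s1).
- move=> u /List.in_app_iff [hu|hu]; last exact: v2.
  by move: v1 => /valid_rcons [w1 w2]; move: u hu; apply/valid_rcons.
- move: e1 e2; rewrite big_cat /= !sum_rcons size_cat size_rcons /= => e1 e2.
  by rewrite e2 size_rcons; lia.
Qed.

Lemma F_lie i x : lie_term i x -> (0 < i)%N -> ncF i.-1 x.
Proof.
move=> hl hi; have -> : x = nc_word 1 [:: (i, x, 1)] by rewrite /nc_word /= mul1r mulr1.
apply: F_word_gen => //=; last by rewrite big_cons big_nil; case: (i) hi => //= n _; rewrite addn0 addn1.
by move=> t [<-|[]].
Qed.

Lemma F0 x : ncF 0 x.
Proof. exact: (F_lie (lie_one x)). Qed.

Lemma lie_mono i x : lie_term i.+2 x -> lie_term i.+1 x.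
Proof.
move E: i.+2 => j h; elim: h i E => [a|m a b hb IH|m|m u w hu IHu hw IHw] i E.
- by [].
- case: i E => [|i] E; first exact: lie_one.
  have Em : m = i.+1 by case: E.
  subst m; apply: lie_comm; exact: IH.
- exact: lie_zero.
- by apply: lie_add; [apply: IHu|apply: IHw].
Qed.

Lemma lie_down i k x : lie_term i x -> (0 < k)%N -> (k <= i)%N -> lie_term k x.
Proof.
move=> h k0; elim: i h => [|i IH] h ki; first by lia.
case: (ltnP k i.+1) => hk; last by have -> : k = i.+1 by lia.
case: i IH h ki hk => [|i] IH h ki hk; first by lia.
by apply: IH; [apply: lie_mono|lia].
Qed.

Lemma F_word a0 s e d : valid s -> (\sum_(t <- s) t.1.1)%N = (e + size s)%N ->
  (d <= e)%N -> ncF d (nc_word a0 s).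
Proof.
elim/last_ind: s e d => [|s t IH] e d v es hd.
  rewrite big_nil /= in es; have -> : d = 0%N by lia.
  exact: F0.
move/valid_rcons: v => [v [t0 tl]].
rewrite sum_rcons size_rcons in es.
set es0 := (\sum_(u <- s) u.1.1)%N in es.
have hes : (size s <= es0)%N.
  rewrite /es0; elim: (s) v => [|u s' IHs] vs; first by rewrite big_nil.
  rewrite big_cons /=; have [u0 _] := vs u (or_introl erefl).
  have := IHs (fun w hw => vs w (or_intror hw)); lia.
rewrite word_rcons.
have IH' : forall d', (d' <= es0 - size s)%N -> ncF d' (nc_word a0 s).
  move=> d' hd'; apply: (IH (es0 - size s)%N d' v) => //; rewrite /es0 subnK //.
case: (leqP d (es0 - size s)) => hd2.
  have -> : d = (d + 0 + 0)%N by rewrite !addn0.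
  apply: F_mul; last exact: F0.
  apply: F_mul; last exact: F0.
  exact: IH'.
have -> : d = ((es0 - size s) + (d - (es0 - size s)) + 0)%N by lia.
apply: F_mul; last exact: F0.
apply: F_mul; first exact: IH'.
have -> : (d - (es0 - size s))%N = (d - (es0 - size s)).+1.-1 by [].
apply: F_lie => //; apply: lie_down tl _ _ => //; lia.
Qed.

Lemma F_mono p q x : ncF p x -> (q <= p)%N -> ncF q x.
Proof.
move=> h hq; elim: h => [y [a0 [s [ne v e ->]]]| |u w _ Hu _ Hw].
- by apply: (@F_word a0 s p).
- exact: ncF_zero.
- exact: ncF_add.
Qed.

Lemma tele3 (X Y Z W : A) : X - W = (X - Y) + (Y - Z) + (Z - W).
Proof. by rewrite !addrA addrNK addrNK. Qed.

Lemma F_comm q r y : ncF q y -> ncF q.+1 (r * y - y * r).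
Proof.
elim=> [y' [a0 [s [ne v e ->]]]| |u w _ Hu _ Hw]; last first.
- by rewrite mulrDr mulrDl opprD addrACA; apply: ncF_add.
- by rewrite mulr0 mul0r subr0; apply: ncF_zero.
elim/last_ind: s ne v q e => [//|s t IH] _ v q e.
move/valid_rcons: v => [v [t0 tl]].
rewrite sum_rcons size_rcons in e.
set es0 := (\sum_(u <- s) u.1.1)%N in e.
have hes : (size s <= es0)%N.
  rewrite /es0; elim: (s) v => [|u s' IHs] vs; first by rewrite big_nil.
  rewrite big_cons /=; have [u0 _] := vs u (or_introl erefl).
  have := IHs (fun w hw => vs w (or_intror hw)); lia.
set w := nc_word a0 s; set z := t.1.2; set a := t.2.
rewrite word_rcons -/w -/z -/a.
have -> : r * (w * z * a) - w * z * a * r =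
  (r * w - w * r) * z * a + w * (r * z - z * r) * a + w * z * (r * a - a * r).
  by rewrite !mulrBl !mulrBr !mulrA !mulrBl (tele3 _ (w * r * z * a) (w * z * r * a)).
have hw : ncF (es0 - size s) w by apply: (@F_word a0 s (es0 - size s)%N) => //; rewrite /es0 subnK.
have hwc : ncF (es0 - size s).+1 (r * w - w * r).
  case E: s => [|u s'].
    rewrite /w /es0 E /nc_word /= big_nil.
    have -> : r * a0 - a0 * r = nc_word 1 [:: (2%N, r * a0 - a0 * r, 1)].
      by rewrite /nc_word /= mul1r mulr1.
    apply: F_word_gen => //; last by rewrite big_cons big_nil.
    by move=> t' [<-|[]]; split => //; apply: lie_comm; apply: lie_one.
  apply: IH => //; first by rewrite E.
  by rewrite -E subnK.
have hz : ncF t.1.1.-1 z by apply: F_lie.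
have hrz : ncF t.1.1 (r * z - z * r).
  have -> : t.1.1 = t.1.1.+1.-1 by [].
  apply: F_lie => //; case: (t.1.1) tl t0 => [//|i] tl _; exact: lie_comm.
have hra : ncF 1 (r * a - a * r).
  have -> : r * a - a * r = nc_word 1 [:: (2%N, r * a - a * r, 1)].
    by rewrite /nc_word /= mul1r mulr1.
  apply: F_word_gen => //; last by rewrite big_cons big_nil.
  by move=> t' [<-|[]]; split => //; apply: lie_comm; apply: lie_one.
have Eq : q.+1 = ((es0 - size s).+1 + t.1.1.-1 + 0)%N.
  move: e t0 hes; rewrite /es0; case: (t.1.1) => //= n; lia.
rewrite Eq.
apply: ncF_add; first apply: ncF_add.
- by apply: F_mul; [apply: F_mul|apply: F0].
- have -> : ((es0 - size s).+1 + t.1.1.-1 + 0 = (es0 - size s) + t.1.1 + 0)%N by lia.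
  by apply: F_mul; [apply: F_mul|apply: F0].
- have -> : ((es0 - size s).+1 + t.1.1.-1 + 0 = (es0 - size s) + t.1.1.-1 + 1)%N by lia.
  by apply: F_mul; [apply: F_mul|].
Qed.

End Filt.

Section Morph.
Variables (A B : algType CC) (f : {lrmorphism A -> B}).

Lemma lie_morph i x : lie_term i x -> lie_term i (f x).
Proof.
elim=> [a|m a b hb IH|m|m u w hu IHu hw IHw].
- exact: lie_one.
- by rewrite rmorphB !rmorphM; apply: lie_comm.
- by rewrite rmorph0; apply: lie_zero.
- by rewrite rmorphD; apply: lie_add.
Qed.

Lemma word_morph a0 s :
  f (nc_word a0 s) = nc_word (f a0) (map (fun t => (t.1.1, f t.1.2, f t.2)) s).
Proof.
elim: s a0 => [|t s IH] a0 //=.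
by rewrite /nc_word /= -/(nc_word _ _) IH !rmorphM.
Qed.

Lemma F_morph d x : ncF d x -> ncF d (f x).
Proof.
elim=> [y [a0 [s [ne v e ->]]]| |u w _ Hu _ Hw].
- rewrite word_morph; apply: F_word_gen.
  + by case: (s) ne.
  + move=> t /List.in_map_iff [u [<- hu]] /=; have [h1 h2] := v u hu.
    by split => //; apply: lie_morph.
  + by rewrite big_map size_map.
- by rewrite rmorph0; apply: ncF_zero.
- by rewrite rmorphD; apply: ncF_add.
Qed.

End Morph.


Section Ore.
Variables (A : algType CC) (S : A -> Prop) (N : nat).
Hypothesis hN : forall i, (N <= i)%N -> forall x : A, ncF i x -> x = 0.
Hypothesis Sm : forall x y, S x -> S y -> S (x * y).
Hypothesis S1 : S 1.

Lemma ore_right x s : S s -> exists y t, S t /\ x * t = s * y.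
Proof.
suff H : forall n x, ncF (N - n) x -> forall s, S s -> exists y t, S t /\ x * t = s * y.
  by move=> hs; apply: (H N x _ s hs); rewrite subnn; apply: F0.
elim=> [|n IH] {}x hx {}s hs.
  rewrite subn0 in hx; rewrite (hN (leqnn N) hx).
  by exists 0, 1; rewrite mul0r mulr0.
have hc : ncF (N - n) (s * x - x * s).
  by apply: F_mono (F_comm s hx) _; lia.
have [y' [t' [ht' e]]] := IH _ hc s hs.
exists (x * t' - y'), (s * t'); split; first exact: Sm.
rewrite mulrBr -e mulrBl !mulrA opprB addrC addrNK.
by [].
Qed.

Lemma rev_right s x : S s -> s * x = 0 -> exists t, S t /\ x * t = 0.
Proof.
move=> hs.
suff H : forall n z, ncF (N - n) z -> s * z = 0 -> exists t, S t /\ z * t = 0.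
  by move=> e; apply: (H N x _ e); rewrite subnn; apply: F0.
move=> n; elim: n => [|n IH] x0 hx e.
  rewrite subn0 in hx; rewrite (hN (leqnn N) hx).
  by exists 1; rewrite mul0r.
have hc : ncF (N - n) (s * x0 - x0 * s).
  by apply: F_mono (F_comm s hx) _; lia.
have [t' [ht' e']] : exists t, S t /\ (s * x0 - x0 * s) * t = 0.
  apply: IH hc _.
  rewrite mulrBr !mulrA e mul0r -mulrA e mulr0 subrr //=.
exists (s * t'); split; first exact: Sm.
by move: e'; rewrite e sub0r mulNr => /eqP; rewrite oppr_eq0 mulrA => /eqP.
Qed.

End Ore.


Section EndAlg.
Variable M : lmodType CC.
Hypothesis Mnt : exists v : M, v != 0.

Definition lin (f : M -> M) := forall k x y, f (k *: x + y) = k *: f x + f y.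
Definition EndM_ (_ : exists v : M, v != 0) := {f : M -> M | `[< lin f >]}.
Local Notation EndM := (EndM_ Mnt).
HB.instance Definition _ := Choice.on EndM.

Definition mkE (f : M -> M) (h : lin f) : EndM := exist _ f (asboolT h).
Definition appE (f : EndM) : M -> M := proj1_sig f.
Lemma linP (f : EndM) : lin (appE f).
Proof. exact: (asboolW (proj2_sig f)). Qed.
Lemma eE (f g : EndM) : (forall x, appE f x = appE g x) -> f = g.
Proof. by move=> h; apply: val_inj; apply: funext. Qed.
Lemma appE_mk f h x : appE (@mkE f h) x = f x. Proof. by []. Qed.

Lemma lin_add f : lin f -> forall x y, f (x + y) = f x + f y.
Proof. by move=> h x y; have := h 1 x y; rewrite !scale1r. Qed.
Lemma lin_0 f : lin f -> f 0 = 0.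
Proof.
move=> h; have := lin_add h 0 0; rewrite addr0 => /eqP.
by rewrite -subr_eq subrr eq_sym => /eqP.
Qed.
Lemma lin_scale f : lin f -> forall k x, f (k *: x) = k *: f x.
Proof. by move=> h k x; rewrite -[k *: x]addr0 h lin_0 // addr0. Qed.

Lemma lin0 : lin (fun _ => 0). Proof. by move=> k x y; rewrite scaler0 addr0. Qed.
Lemma linN (f : EndM) : lin (fun x => - appE f x).
Proof. by move=> k x y; rewrite linP opprD scalerN. Qed.
Lemma linD (f g : EndM) : lin (fun x => appE f x + appE g x).
Proof. by move=> k x y; rewrite !linP scalerDr addrACA. Qed.
Lemma lin1 : lin id. Proof. by []. Qed.
Lemma linM (f g : EndM) : lin (fun x => appE f (appE g x)).
Proof. by move=> k x y; rewrite !linP. Qed.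
Lemma linZ k (f : EndM) : lin (fun x => k *: appE f x).
Proof. by move=> l x y; rewrite linP scalerDr !scalerA mulrC. Qed.

Definition zeroE := mkE lin0.
Definition oppE f := mkE (linN f).
Definition addE f g := mkE (linD f g).
Definition oneE := mkE lin1.
Definition mulE f g := mkE (linM f g).
Definition scaleE k f := mkE (linZ k f).

Lemma addEA : associative addE. Proof. by move=> f g h; apply: eE => x; rewrite /= addrA. Qed.
Lemma addEC : commutative addE. Proof. by move=> f g; apply: eE => x; rewrite /= addrC. Qed.
Lemma add0E : left_id zeroE addE. Proof. by move=> f; apply: eE => x; rewrite /= add0r. Qed.
Lemma addNE : left_inverse zeroE oppE addE. Proof. by move=> f; apply: eE => x; rewrite /= addNr. Qed.
HB.instance Definition _ := GRing.isZmodule.Build EndM addEA addEC add0E addNE.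

Lemma mulEA : associative mulE. Proof. by move=> f g h; apply: eE. Qed.
Lemma mul1E : left_id oneE mulE. Proof. by move=> f; apply: eE. Qed.
Lemma mulE1 : right_id oneE mulE. Proof. by move=> f; apply: eE. Qed.
Lemma mulEDl : left_distributive mulE +%R.
Proof. by move=> f g h; apply: eE. Qed.
Lemma mulEDr : right_distributive mulE +%R.
Proof. by move=> f g h; apply: eE => x /=; rewrite lin_add //; apply: linP. Qed.
Lemma oneE_neq0 : oneE != 0.
Proof.
apply/eqP => /(congr1 appE) /= e; case: Mnt => v /eqP; apply.
by have := congr1 (fun f => f v) e.
Qed.
HB.instance Definition _ := GRing.Zmodule_isNzRing.Build EndM mulEA mul1E mulE1 mulEDl mulEDr oneE_neq0.

Lemma scaleEA k l f : scaleE k (scaleE l f) = scaleE (k * l) f.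
Proof. by apply: eE => x /=; rewrite scalerA. Qed.
Lemma scaleE1 : left_id 1 scaleE. Proof. by move=> f; apply: eE => x /=; rewrite scale1r. Qed.
Lemma scaleEDr : right_distributive scaleE +%R.
Proof. by move=> k f g; apply: eE => x /=; rewrite scalerDr. Qed.
Lemma scaleEDl f : {morph scaleE^~ f : a b / a + b}.
Proof. by move=> k l; apply: eE => x /=; rewrite scalerDl. Qed.
HB.instance Definition _ := GRing.Zmodule_isLmodule.Build CC EndM scaleEA scaleE1 scaleEDr scaleEDl.

Lemma scaleEAl (k : CC) (f g : EndM) : k *: (f * g) = (k *: f) * g.
Proof. by apply: eE. Qed.
HB.instance Definition _ := GRing.Lmodule_isLalgebra.Build CC EndM scaleEAl.
Lemma scaleEAr (k : CC) (f g : EndM) : k *: (f * g) = f * (k *: g).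
Proof. by apply: eE => x /=; rewrite lin_scale //; apply: linP. Qed.
HB.instance Definition _ := GRing.Lalgebra_isAlgebra.Build CC EndM scaleEAr.

Lemma appE_mul (f g : EndM) x : appE (f * g) x = appE f (appE g x). Proof. by []. Qed.
Lemma appE_one x : appE (1 : EndM) x = x. Proof. by []. Qed.
Lemma appE_zero x : appE (0 : EndM) x = 0. Proof. by []. Qed.
Lemma appE_add (f g : EndM) x : appE (f + g) x = appE f x + appE g x. Proof. by []. Qed.
Lemma appE_opp (f : EndM) x : appE (- f) x = - appE f x. Proof. by []. Qed.
Lemma appE_scale k (f : EndM) x : appE (k *: f) x = k *: appE f x. Proof. by []. Qed.

End EndAlg.


Section Loc.
Variables (A : algType CC) (S : A -> Prop).
Hypothesis Sm : forall x y, S x -> S y -> S (x * y).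
Hypothesis S1 : S 1.
Hypothesis S0 : ~ S 0.
Hypothesis ore : forall x s, S s -> exists y t, S t /\ x * t = s * y.
Hypothesis rev : forall s x, S s -> s * x = 0 -> exists t, S t /\ x * t = 0.

Definition rel (x y : A * A) : Prop :=
  [/\ S x.2, S y.2 & exists c c', [/\ x.2 * c = y.2 * c', S (x.2 * c) & x.1 * c = y.1 * c']].

Lemma cancelS u a b : S u -> u * a = u * b -> exists t, S t /\ a * t = b * t.
Proof.
move=> hu e.
have [t [ht et]] : exists t, S t /\ (a - b) * t = 0.
  by apply: rev hu _; rewrite mulrBr e subrr.
by exists t; split => //; apply/eqP; rewrite -subr_eq0 -mulrBl et.
Qed.

Lemma common u v : S u -> S v -> exists p q, u * p = v * q /\ S (u * p).
Proof.
move=> hu hv; have [y [t [ht e]]] := ore v hu.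
by exists y, t; rewrite -e; split => //; apply: Sm.
Qed.

Lemma rel_refl x : S x.2 -> rel x x.
Proof. by move=> h; split => //; exists 1, 1; rewrite !mulr1. Qed.

Lemma rel_sym x y : rel x y -> rel y x.
Proof. by case=> hx hy [c [c' [e1 e2 e3]]]; split => //; exists c', c; rewrite -e1. Qed.

Lemma rel_trans x y z : rel x y -> rel y z -> rel x z.
Proof.
case: x y z => [a u] [b v] [e w] /= [hu hv [c1 [c1' [E1 S1' F1]]]] [_ hw [c2 [c2' [E2 S2' F2]]]] /=.
have [y [t [ht Et]]] := ore (v * c2) S1'.
have [t' [ht' Et']] : exists t', S t' /\ c2 * t * t' = c1' * y * t'.
  by apply: (cancelS hv); rewrite !mulrA Et E1.
split => //; exists (c1 * y * t'), (c2' * t * t'); split.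
- by rewrite !mulrA -Et E2.
- by rewrite !mulrA -Et; apply: Sm => //; apply: Sm.
- by rewrite !mulrA F1 -(mulrA b) -(mulrA b) -Et' !mulrA F2.
Qed.

Lemma rel_eq x y : rel x y -> rel x = rel y.
Proof.
move=> h; apply: funext => z; apply: propext; split => h'.
- exact: rel_trans (rel_sym h) h'.
- exact: rel_trans h h'.
Qed.

Definition fixp (x : A * A) : A * A := if `[< S x.2 >] then x else (0, 1).
Lemma fixpS x : S (fixp x).2.
Proof. by rewrite /fixp; case: asboolP. Qed.
Lemma fixpE x : S x.2 -> fixp x = x.
Proof. by rewrite /fixp; case: asboolP. Qed.

Definition isCls (P : A * A -> Prop) : bool := `[< exists x, S x.2 /\ P = rel x >].
Definition V := {P : A * A -> Prop | isCls P}.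
HB.instance Definition _ := Choice.on V.

Definition piV (x : A * A) : V :=
  exist _ (rel (fixp x)) (asboolT (ex_intro _ (fixp x) (conj (fixpS x) erefl))).
Definition reprV (v : V) : A * A := proj1_sig (cid (asboolW (proj2_sig v))).

Lemma reprP v : S (reprV v).2 /\ proj1_sig v = rel (reprV v).
Proof. by rewrite /reprV; case: cid => x [h1 h2]. Qed.

Lemma reprS v : S (reprV v).2.
Proof. by case: (reprP v). Qed.

Lemma piK v : piV (reprV v) = v.
Proof.
apply: val_inj => /=; have [h1 h2] := reprP v.
by rewrite fixpE // h2.
Qed.

Lemma pi_eq x y : S x.2 -> S y.2 -> (piV x = piV y <-> rel x y).
Proof.
move=> hx hy; split.
- move/(congr1 val) => /=; rewrite !fixpE // => e.
  by rewrite e; apply: rel_refl.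
- by move=> h; apply: val_inj => /=; rewrite !fixpE //; apply: rel_eq.
Qed.

Lemma repr_pi x : S x.2 -> rel (reprV (piV x)) x.
Proof. by move=> hx; apply/pi_eq => //; [apply: reprS | rewrite piK]. Qed.

Lemma Vind (P : V -> Prop) : (forall x, S x.2 -> P (piV x)) -> forall v, P v.
Proof. by move=> H v; rewrite -(piK v); apply: H; apply: reprS. Qed.

Lemma common' u v : exists pq : A * A, S u -> S v -> u * pq.1 = v * pq.2 /\ S (u * pq.1).
Proof.
case: (pselect (S u /\ S v)) => [[hu hv]|nh].
  by have [p [q h]] := common hu hv; exists (p, q).
by exists (0, 0) => hu hv; case: nh.
Qed.
Definition cp u v := proj1_sig (cid (common' u v)).
Lemma cpP u v : S u -> S v -> u * (cp u v).1 = v * (cp u v).2 /\ S (u * (cp u v).1).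
Proof. by rewrite /cp; case: cid => pq h; apply: h. Qed.

Lemma ore' x s : exists yt : A * A, S s -> S yt.2 /\ x * yt.2 = s * yt.1.
Proof.
case: (pselect (S s)) => [hs|nh].
  by have [y [t h]] := ore x hs; exists (y, t).
by exists (0, 0) => hs; case: nh.
Qed.
Definition oc x s := proj1_sig (cid (ore' x s)).
Lemma ocP x s : S s -> S (oc x s).2 /\ x * (oc x s).2 = s * (oc x s).1.
Proof. by rewrite /oc; case: cid => yt h; apply: h. Qed.

Lemma align u W W' p0 p c c' : S u -> W = u * p0 -> W' = u * p -> W * c = W' * c' ->
  exists t, S t /\ p0 * c * t = p * c' * t.
Proof.
move=> hu e1 e2 e3.
have [t [ht et]] : exists t, S t /\ (p0 * c) * t = (p * c') * t.
  by apply: (cancelS hu); rewrite !mulrA -e1 -e2.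
by exists t.
Qed.

Lemma mid4 (a p c t s : A) : a * p * (c * t * s) = a * (p * c * t) * s.
Proof. by rewrite !mulrA. Qed.
Lemma mid3 (a p c s : A) : a * p * (c * s) = a * (p * c * s).
Proof. by rewrite !mulrA. Qed.

Lemma SUM2 a b u v W W' p q p' q' : S u -> S v -> S W -> S W' ->
  W = u * p -> W = v * q -> W' = u * p' -> W' = v * q' ->
  rel (a * p + b * q, W) (a * p' + b * q', W').
Proof.
move=> hu hv hW hW' e1 e2 e3 e4.
have [c1 [c1' [E1 SE1]]] := common hW hW'.
have [t1 [ht1 T1]] := align hu e1 e3 E1.
have E2 : W * (c1 * t1) = W' * (c1' * t1) by rewrite !mulrA E1.
have [t2 [ht2 T2]] := align hv e2 e4 E2.
split => //; exists (c1 * t1 * t2), (c1' * t1 * t2); split => /=.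
- by rewrite !mulrA E1.
- by rewrite !mulrA; apply: Sm => //; apply: Sm.
- rewrite !mulrDl !mid4 T1; congr (_ + _); rewrite -!mulrA; congr (b * _).
  by move: T2; rewrite !mulrA.
Qed.


Lemma SUM3 a b e u v w W W' p q r p' q' r' : S u -> S v -> S w -> S W -> S W' ->
  W = u * p -> W = v * q -> W = w * r -> W' = u * p' -> W' = v * q' -> W' = w * r' ->
  rel (a * p + b * q + e * r, W) (a * p' + b * q' + e * r', W').
Proof.
move=> hu hv hw hW hW' e1 e2 e3 e4 e5 e6.
have [c1 [c1' [E1 SE1]]] := common hW hW'.
have [t1 [ht1 T1]] := align hu e1 e4 E1.
have E2 : W * (c1 * t1) = W' * (c1' * t1) by rewrite !mulrA E1.
have [t2 [ht2 T2]] := align hv e2 e5 E2.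
have E3 : W * (c1 * t1 * t2) = W' * (c1' * t1 * t2) by rewrite !mulrA E1.
have [t3 [ht3 T3]] := align hw e3 e6 E3.
split => //; exists (c1 * t1 * t2 * t3), (c1' * t1 * t2 * t3); split => /=.
- by rewrite !mulrA E1.
- by rewrite !mulrA; apply: Sm => //; apply: Sm => //; apply: Sm.
- rewrite !mulrDl; congr (_ + _ + _); rewrite -!mulrA; congr (_ * _); rewrite !mulrA.
  + by rewrite T1.
  + by move: T2; rewrite !mulrA => ->.
  + by move: T3; rewrite !mulrA => ->.
Qed.

Definition addrep (x y : A * A) : A * A :=
  (x.1 * (cp x.2 y.2).1 + y.1 * (cp x.2 y.2).2, x.2 * (cp x.2 y.2).1).

Lemma addrepS x y : S x.2 -> S y.2 -> S (addrep x y).2.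
Proof. by move=> hx hy; case: (cpP hx hy). Qed.

Lemma sum_any x y w p q : S x.2 -> S y.2 -> S w -> w = x.2 * p -> w = y.2 * q ->
  rel (addrep x y) (x.1 * p + y.1 * q, w).
Proof.
move=> hx hy hw e1 e2; have [E SE] := cpP hx hy.
by apply: (SUM2 _ _ hx hy SE hw) => //.
Qed.

Lemma addrep_wdl x x' y : rel x x' -> S y.2 -> rel (addrep x y) (addrep x' y).
Proof.
case: x x' => [a u] [a' u'] [/= hu hu' [c [c' [E SE F]]]] hy.
have [p [q [Epq Sp]]] := common SE hy.
have r1 := @sum_any (a, u) y _ (c * p) q hu hy Sp (esym (mulrA _ _ _)) Epq.
have r2 := @sum_any (a', u') y _ (c' * p) q hu' hy Sp _ Epq.
apply: rel_trans r1 _; rewrite mulrA F -mulrA; apply: rel_sym; apply: r2.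
by rewrite /= mulrA E.
Qed.

Lemma addrepC x y : S x.2 -> S y.2 -> rel (addrep x y) (addrep y x).
Proof.
move=> hx hy; have [E SE] := cpP hx hy.
apply: rel_sym; rewrite {2}/addrep /= addrC.
by apply: sum_any => //.
Qed.

Lemma addrep_wdr x y y' : S x.2 -> rel y y' -> rel (addrep x y) (addrep x y').
Proof.
move=> hx hyy; case: (hyy) => hy hy' _.
apply: rel_trans (addrepC hx hy) _; apply: rel_trans (addrep_wdl hyy hx) _.
exact: addrepC.
Qed.

Definition addV (v w : V) : V := piV (addrep (reprV v) (reprV w)).
Definition zeroV : V := piV (0, 1).
Definition oppV (v : V) : V := piV (- (reprV v).1, (reprV v).2).

Lemma addV_pi x y : S x.2 -> S y.2 -> addV (piV x) (piV y) = piV (addrep x y).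
Proof.
move=> hx hy; apply/pi_eq.
- by apply: addrepS; apply: reprS.
- by apply: addrepS.
apply: rel_trans (addrep_wdl (repr_pi hx) (reprS _)) _.
exact: addrep_wdr (repr_pi hy).
Qed.

Lemma oppV_pi x : S x.2 -> oppV (piV x) = piV (- x.1, x.2).
Proof.
move=> hx; apply/pi_eq => //; first exact: reprS.
case: (repr_pi hx) => h1 h2 [c [c' [E SE F]]].
by split => //; exists c, c'; rewrite /= !mulNr F.
Qed.

Lemma addVA : associative addV.
Proof.
elim/Vind => x hx; elim/Vind => y hy; elim/Vind => z hz.
rewrite !addV_pi //; try (by apply: addrepS).
apply/pi_eq; try (by apply: addrepS => //; apply: addrepS).
case: x y z hx hy hz => [a u] [b v] [e w] /= hu hv hw.
rewrite /addrep /=.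
have [Eqr Sqr] := cpP hv hw.
set q' := (cp v w).1 in Eqr Sqr *; set r' := (cp v w).2 in Eqr Sqr *.
have [EPQ SPQ] := cpP hu Sqr.
set P := (cp u (v * q')).1 in EPQ SPQ *; set Q := (cp u (v * q')).2 in EPQ SPQ *.
have [E12 S12] := cpP hu hv.
set p1 := (cp u v).1 in E12 S12 *; set q1 := (cp u v).2 in E12 S12 *.
have [E2 S2] := cpP S12 hw.
set p2 := (cp (u * p1) w).1 in E2 S2 *; set r2 := (cp (u * p1) w).2 in E2 S2 *.
rewrite !mulrDl addrA -!mulrA.
have S2' : S (u * (p1 * p2)) by rewrite mulrA.
apply: (SUM3 _ _ _ hu hv hw SPQ S2') => //.
- by rewrite EPQ mulrA.
- by rewrite EPQ Eqr mulrA.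
- by rewrite mulrA E12 mulrA.
- by rewrite mulrA E2.
Qed.

Lemma addVC : commutative addV.
Proof.
elim/Vind => x hx; elim/Vind => y hy; rewrite !addV_pi //.
by apply/pi_eq; [apply: addrepS|apply: addrepS|apply: addrepC].
Qed.

Lemma add0V : left_id zeroV addV.
Proof.
elim/Vind => x hx; rewrite /zeroV addV_pi //.
apply/pi_eq => //; first by apply: addrepS.
case: x hx => [a u] /= hu; have [E SE] := cpP S1 hu.
rewrite /addrep /=; split => //; exists 1, (cp 1 u).2; rewrite !mulr1 E.
by split => //; [rewrite -E | rewrite mul0r add0r].
Qed.

Lemma addNV : left_inverse zeroV oppV addV.
Proof.
elim/Vind => x hx; rewrite oppV_pi // addV_pi //.
apply/pi_eq => //; first by apply: addrepS.
case: x hx => [a u] /= hu; have [E SE] := cpP hu hu.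
have [t [ht T]] := cancelS hu E.
rewrite /addrep /=; split => //; exists t, (u * (cp u u).1 * t); split.
- by rewrite mul1r.
- exact: Sm.
- by rewrite mul0r mulrDl -!mulrA T mulNr addNr.
Qed.

HB.instance Definition _ := GRing.isZmodule.Build V addVA addVC add0V addNV.

Definition scaleV (k : CC) (v : V) : V := piV (k *: (reprV v).1, (reprV v).2).

Lemma scaleV_pi k x : S x.2 -> scaleV k (piV x) = piV (k *: x.1, x.2).
Proof.
move=> hx; apply/pi_eq => //; first exact: reprS.
case: (repr_pi hx) => h1 h2 [c [c' [E SE F]]].
by split => //; exists c, c'; rewrite /= -!scalerAl F.
Qed.

Lemma addVE (v w : V) : v + w = addV v w. Proof. by []. Qed.

Lemma scaleVA k l v : scaleV k (scaleV l v) = scaleV (k * l) v.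
Proof. by elim/Vind: v => x hx; rewrite !scaleV_pi // scalerA. Qed.

Lemma scaleV1 : left_id 1 scaleV.
Proof. by elim/Vind => x hx; rewrite scaleV_pi // scale1r; case: x hx. Qed.

Lemma scaleVDr : right_distributive scaleV +%R.
Proof.
move=> k; elim/Vind => x hx; elim/Vind => y hy.
rewrite !addVE addV_pi // scaleV_pi; last exact: addrepS.
rewrite !scaleV_pi // addV_pi //; congr piV; rewrite /addrep /=.
by rewrite scalerDr !scalerAl.
Qed.

Lemma scaleVDl v : {morph scaleV^~ v : a b / a + b}.
Proof.
elim/Vind: v => x hx k l.
rewrite !scaleV_pi // !addVE addV_pi //.
apply/pi_eq => //; first exact: addrepS.
case: x hx => [a u] /= hu; have [E SE] := cpP hu hu.
have [t [ht T]] := cancelS hu E.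
rewrite /addrep /=; split => //; exists ((cp u u).1 * t), t; split.
- by rewrite mulrA.
- by rewrite mulrA; apply: Sm.
- by rewrite mulrDl -!mulrA T /= scalerDl mulrDl.
Qed.

HB.instance Definition _ := GRing.Zmodule_isLmodule.Build CC V scaleVA scaleV1 scaleVDr scaleVDl.


Lemma scaleVE k (v : V) : k *: v = scaleV k v. Proof. by []. Qed.
Lemma zeroVE : (0 : V) = piV (0, 1). Proof. by []. Qed.

Definition actV (r : A) (v : V) : V := piV (r * (reprV v).1, (reprV v).2).

Lemma actV_pi r x : S x.2 -> actV r (piV x) = piV (r * x.1, x.2).
Proof.
move=> hx; apply/pi_eq => //; first exact: reprS.
case: (repr_pi hx) => h1 h2 [c [c' [E SE F]]].
by split => //; exists c, c'; rewrite /= -!mulrA F.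
Qed.

Lemma same_den a b u : S u -> rel (addrep (a, u) (b, u)) (a + b, u).
Proof.
move=> hu; have [E SE] := cpP hu hu; have [t [ht T]] := cancelS hu E.
split => //.
exists t, ((cp u u).1 * t); split => /=.
- by rewrite mulrA.
- exact: Sm.
- by rewrite mulrDl -!mulrA -T -mulrDl.
Qed.

Lemma actV_lin r : lin (actV r).
Proof.
move=> k; elim/Vind => x hx; elim/Vind => y hy.
rewrite !scaleVE scaleV_pi // addVE addV_pi // actV_pi; last exact: addrepS.
rewrite !actV_pi // scaleV_pi // addVE addV_pi //.
case: x hx => a u /= hu; congr piV; rewrite /addrep /=.
by rewrite mulrDr !mulrA -scalerAr.
Qed.

Lemma actV_mul r1 r2 v : actV (r1 * r2) v = actV r1 (actV r2 v).
Proof. by elim/Vind: v => x hx; rewrite !actV_pi // mulrA. Qed.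

Lemma actV_one v : actV 1 v = v.
Proof. by elim/Vind: v => x hx; rewrite actV_pi // mul1r; case: x hx. Qed.

Lemma actV_add r1 r2 v : actV (r1 + r2) v = actV r1 v + actV r2 v.
Proof.
elim/Vind: v => x hx; rewrite !actV_pi // addVE addV_pi //.
apply/pi_eq => //; first exact: addrepS.
by apply: rel_sym; rewrite mulrDl; apply: same_den.
Qed.

Lemma actV_scale k r v : actV (k *: r) v = k *: actV r v.
Proof. by elim/Vind: v => x hx; rewrite !actV_pi // scaleVE scaleV_pi // scalerAl. Qed.

Lemma actV_sub r v w : actV r (v - w) = actV r v - actV r w.
Proof.
by rewrite (lin_add (actV_lin r)) -scaleN1r (lin_scale (actV_lin r)) scaleN1r.
Qed.

Definition invV (s : A) (v : V) : V :=
  piV ((oc (reprV v).1 s).1, (reprV v).2 * (oc (reprV v).1 s).2).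

Lemma act_inv s v : S s -> actV s (invV s v) = v.
Proof.
move=> hs; have [ht E] := ocP (reprV v).1 hs.
have hu := reprS v.
rewrite /invV actV_pi /=; last exact: Sm.
transitivity (piV (reprV v)); last exact: piK.
apply/pi_eq => //=; first exact: Sm.
split => //=; first exact: Sm.
exists 1, (oc (reprV v).1 s).2; rewrite !mulr1 -E; split => //; exact: Sm.
Qed.

Lemma act_inj s v : S s -> actV s v = 0 -> v = 0.
Proof.
move=> hs; elim/Vind: v => x hx; rewrite actV_pi // zeroVE.
case/pi_eq => // _ _ [c [c' [/= E SE F]]].
rewrite mul0r -mulrA in F.
have [t [ht T]] := rev hs F.
apply/pi_eq => //; split => //; exists (c * t), (x.2 * c * t); split => /=.
- by rewrite mul1r mulrA.
- by rewrite mulrA; apply: Sm.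
- by rewrite mul0r mulrA.
Qed.

Lemma act_inj2 s v w : S s -> actV s v = actV s w -> v = w.
Proof.
move=> hs e; apply/eqP; rewrite -subr_eq0; apply/eqP; apply: (act_inj hs).
by rewrite actV_sub e subrr.
Qed.

Lemma invV_lin s : S s -> lin (invV s).
Proof.
move=> hs k x y; apply: (act_inj2 hs).
by rewrite act_inv // (actV_lin s) !act_inv.
Qed.

Lemma inv_act s v : S s -> invV s (actV s v) = v.
Proof. by move=> hs; apply: (act_inj2 hs); rewrite act_inv. Qed.

Lemma V_nt : exists v : V, v != 0.
Proof.
exists (piV (1, 1)); apply/eqP; rewrite zeroVE; case/pi_eq => // _ _ [c [c' [/= E SE F]]].
by apply: S0; move: SE; rewrite F mul0r.
Qed.

Lemma act_ker w : actV w (piV (1, 1)) = 0 -> exists t, S t /\ w * t = 0.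
Proof.
rewrite actV_pi // zeroVE; case/pi_eq => //= _ _ [c [c' [/= E SE F]]].
by exists c; rewrite mul1r in SE; rewrite mulr1 in F; rewrite F mul0r.
Qed.

Definition EndV := EndM_ V_nt.
Definition gA (r : A) : EndV := @mkE _ V_nt _ (actV_lin r).

Lemma gA_zmod : zmod_morphism gA.
Proof.
move=> r1 r2; apply: eE => v; rewrite appE_add appE_opp !appE_mk actV_add.
by rewrite -[- r2]scaleN1r actV_scale scaleN1r.
Qed.
HB.instance Definition _ := GRing.isZmodMorphism.Build A EndV gA gA_zmod.
Lemma gA_mult : multiplicative gA.
Proof.
split; first by move=> r1 r2; apply: eE => v; rewrite appE_mul !appE_mk actV_mul.
by apply: eE => v; rewrite appE_one appE_mk actV_one.
Qed.
HB.instance Definition _ := GRing.isMultiplicative.Build A EndV gA gA_mult.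
Lemma gA_scale : scalable gA.
Proof. by move=> k r; apply: eE => v; rewrite appE_scale !appE_mk actV_scale. Qed.
HB.instance Definition _ := GRing.isScalable.Build CC A EndV *:%R gA gA_scale.

Definition gA_lr : {lrmorphism A -> EndV} := gA.

Lemma gA_inv s : S s -> invertible (gA s).
Proof.
move=> hs; exists (@mkE _ V_nt _ (invV_lin hs)); split; apply: eE => v.
- by rewrite appE_mul !appE_mk act_inv.
- by rewrite appE_mul !appE_mk inv_act.
Qed.

Lemma gA_ker w : gA w = 0 -> exists t, S t /\ w * t = 0.
Proof. by move=> e; apply: act_ker; have := congr1 (fun f => appE f (piV (1, 1))) e. Qed.


End Loc.


Section Main.
Variables (A B : algType CC) (S : A -> Prop) (iota : {lrmorphism A -> B}) (N : nat).
Hypothesis hN : forall i, (N <= i)%N -> forall x : A, ncF i x -> x = 0.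
Hypothesis Sm : forall x y, S x -> S y -> S (x * y).
Hypothesis S1 : S 1.
Hypothesis S0 : ~ S 0.
Hypothesis hfr : is_ring_of_fractions S iota.

Let ore := ore_right hN Sm S1.
Let rev := rev_right hN Sm S1.

Lemma inv_ex s : exists y : B, S s -> iota s * y = 1 /\ y * iota s = 1.
Proof.
case: (pselect (S s)) => [hs|nh]; last by exists 0.
by have [y hy] := hfr.1 s hs; exists y.
Qed.
Definition inv s := proj1_sig (cid (inv_ex s)).
Lemma invR s : S s -> iota s * inv s = 1.
Proof. by rewrite /inv; case: cid => y h /h []. Qed.
Lemma invL s : S s -> inv s * iota s = 1.
Proof. by rewrite /inv; case: cid => y h /h []. Qed.

Lemma kerB w : iota w = 0 -> exists t, S t /\ w * t = 0.
Proof.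
move=> e.
have [[h hh] _] := hfr.2 _ (gA_lr Sm S1 S0 ore rev) (gA_inv Sm S1 S0 ore rev).
apply: (@gA_ker A S Sm S1 S0 ore rev w).
transitivity (h (iota w)); first by rewrite hh.
by rewrite e rmorph0.
Qed.

Lemma inv1 : inv 1 = 1.
Proof. by have := invL S1; rewrite rmorph1 mulr1. Qed.

Lemma inv_mulr s p : S s -> S (s * p) -> inv s = iota p * inv (s * p).
Proof.
move=> hs hsp; rewrite -[inv s]mulr1 -(invR hsp) rmorphM !mulrA invL // mul1r.
by [].
Qed.

Lemma inv_prod s t : S s -> S t -> inv (s * t) = inv t * inv s.
Proof.
move=> hs ht; have hst := Sm hs ht.
rewrite -[inv t * inv s]mulr1 -(invR hst) rmorphM !mulrA -(mulrA _ (inv s)) invL // mulr1.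
by rewrite invL // mul1r.
Qed.

Lemma swap s t a y : S s -> S t -> a * t = s * y -> inv s * iota a = iota y * inv t.
Proof.
move=> hs ht e.
rewrite -[inv s * iota a]mulr1 -(invR ht) !mulrA -(mulrA _ (iota a)) -rmorphM e rmorphM.
by rewrite mulrA invL // mul1r.
Qed.

Definition isFrac (b : B) := exists a s, S s /\ b = iota a * inv s.

Lemma frac_closed : GRing.subsemialg_closed (fun b => `[< isFrac b >]).
Proof.
split.
- apply/asboolP; exists 1, 1; split => //; by rewrite inv1 rmorph1 mulr1.
- split.
  + by apply/asboolP; exists 0, 1; split => //; rewrite rmorph0 mul0r.
  + move=> b1 b2 /asboolP [a1 [s1 [h1 ->]]] /asboolP [a2 [s2 [h2 ->]]]; apply/asboolP.
    have [q [p [hp E]]] := ore s2 h1.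
    have hw : S (s1 * q) by rewrite -E; apply: Sm.
    exists (a1 * q + a2 * p), (s1 * q); split => //.
    have hw2 : S (s2 * p) by apply: Sm.
    rewrite (inv_mulr h1 hw) (inv_mulr h2 hw2) E.
    by rewrite !mulrA -!rmorphM -mulrDl -rmorphD.
- move=> k b /asboolP [a [s [hs ->]]]; apply/asboolP.
  by exists (k *: a), s; split => //; rewrite linearZ scalerAl.
- move=> b1 b2 /asboolP [a1 [s1 [h1 ->]]] /asboolP [a2 [s2 [h2 ->]]]; apply/asboolP.
  have [y [t [ht E]]] := ore a2 h1.
  exists (a1 * y), (s2 * t); split; first exact: Sm.
  rewrite -mulrA (mulrA (inv s1)) (swap h1 ht E) inv_prod //.
  by rewrite rmorphM !mulrA.
Qed.

Definition FB := {b : B | `[< isFrac b >]}.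
HB.instance Definition _ := [isSub for (@proj1_sig B (fun b => `[< isFrac b >]) : FB -> B)].
HB.instance Definition _ := [Choice of FB by <:].
HB.instance Definition _ := GRing.SubChoice_isSubAlgebra.Build CC B (fun b => `[< isFrac b >]) FB frac_closed.

Lemma iota_frac a : `[< isFrac (iota a) >].
Proof. by apply/asboolP; exists a, 1; split => //; rewrite inv1 mulr1. Qed.
Definition iotaF (a : A) : FB := exist _ (iota a) (iota_frac a).

Lemma iotaF_zmod : zmod_morphism iotaF.
Proof. by move=> x y; apply: val_inj; rewrite /= rmorphB. Qed.
HB.instance Definition _ := GRing.isZmodMorphism.Build A FB iotaF iotaF_zmod.
Lemma iotaF_mult : multiplicative iotaF.
Proof. by split; [move=> x y; apply: val_inj; rewrite /= rmorphM | apply: val_inj; rewrite /= rmorph1]. Qed.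
HB.instance Definition _ := GRing.isMultiplicative.Build A FB iotaF iotaF_mult.
Lemma iotaF_scale : scalable iotaF.
Proof. by move=> k x; apply: val_inj; rewrite /= linearZ. Qed.
HB.instance Definition _ := GRing.isScalable.Build CC A FB *:%R iotaF iotaF_scale.
Definition iotaF_lr : {lrmorphism A -> FB} := iotaF.

Lemma inv_frac s : S s -> `[< isFrac (inv s) >].
Proof. by move=> hs; apply/asboolP; exists 1, s; split => //; rewrite rmorph1 mul1r. Qed.

Lemma hinvF s : S s -> invertible (iotaF_lr s).
Proof.
move=> hs; exists (exist _ (inv s) (inv_frac hs)); split; apply: val_inj => /=.
- exact: invR.
- exact: invL.
Qed.

Definition hF : {lrmorphism B -> FB} := proj1_sig (cid ((hfr.2 FB iotaF_lr hinvF).1)).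
Lemma hFP a : hF (iota a) = iotaF_lr a.
Proof. by rewrite /hF; case: cid. Qed.

Definition kB (b : B) : B := val (hF b).
Lemma kB_zmod : zmod_morphism kB.
Proof. by move=> x y; rewrite /kB rmorphB. Qed.
HB.instance Definition _ := GRing.isZmodMorphism.Build B B kB kB_zmod.
Lemma kB_mult : multiplicative kB.
Proof. by split; [move=> x y; rewrite /kB rmorphM | rewrite /kB rmorph1]. Qed.
HB.instance Definition _ := GRing.isMultiplicative.Build B B kB kB_mult.
Lemma kB_scale : scalable kB.
Proof. by move=> k x; rewrite /kB linearZ. Qed.
HB.instance Definition _ := GRing.isScalable.Build CC B B *:%R kB kB_scale.
Definition kB_lr : {lrmorphism B -> B} := kB.

Lemma all_frac b : isFrac b.
Proof.
have e := (hfr.2 B iota hfr.1).2 idfun kB_lr (fun a => erefl) _ b.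
have -> : b = val (hF b) by apply: e => a; rewrite /= /kB hFP.
exact: (asboolW (valP (hF b))).
Qed.


Inductive G (d : nat) : B -> Prop :=
  | G_gen y c : ncF d y -> G d (iota y * c)
  | G_zero : G d 0
  | G_add x y : G d x -> G d y -> G d (x + y).

Lemma G_mulr d x c : G d x -> G d (x * c).
Proof.
elim=> [y c' hy| |u w _ Hu _ Hw].
- by rewrite -mulrA; apply: G_gen.
- by rewrite mul0r; apply: G_zero.
- by rewrite mulrDl; apply: G_add.
Qed.

Lemma G_iota d y : ncF d y -> G d (iota y).
Proof. by move=> h; rewrite -[iota y]mulr1; apply: G_gen. Qed.

Lemma G_mono p q x : G p x -> (q <= p)%N -> G q x.
Proof.
move=> h hq; elim: h => [y c hy| |u w _ Hu _ Hw].
- by apply: G_gen; apply: F_mono hy hq.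
- exact: G_zero.
- exact: G_add.
Qed.

Lemma G_opp d x : G d x -> G d (- x).
Proof. by move=> h; rewrite -mulrN1; apply: G_mulr. Qed.

Lemma G_sub d x y : G d x -> G d y -> G d (x - y).
Proof. by move=> hx hy; apply: G_add => //; apply: G_opp. Qed.

Lemma G_big d x : (N <= d)%N -> G d x -> x = 0.
Proof.
move=> hd; elim=> [y c hy| |u w _ Hu _ Hw].
- by rewrite (hN hd hy) rmorph0 mul0r.
- by [].
- by rewrite Hu Hw addr0.
Qed.

Lemma G_ncF d x : G d x -> ncF d x.
Proof.
elim=> [y c hy| |u w _ Hu _ Hw].
- by apply: F_mulr; apply: F_morph.
- exact: ncF_zero.
- exact: ncF_add.
Qed.

Lemma G_mull_iota d r x : G d x -> G d (iota r * x).
Proof.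
elim=> [y c hy| |u w _ Hu _ Hw].
- by rewrite mulrA -rmorphM; apply: G_gen; apply: F_mull.
- by rewrite mulr0; apply: G_zero.
- by rewrite mulrDr; apply: G_add.
Qed.

Lemma RI s x : S s -> x * iota s * inv s = x.
Proof. by move=> hs; rewrite -mulrA invR // mulr1. Qed.
Lemma LI s x : S s -> inv s * iota s * x = x.
Proof. by move=> hs; rewrite invL // mul1r. Qed.
Lemma RI' s x : S s -> x * inv s * iota s = x.
Proof. by move=> hs; rewrite -mulrA invL // mulr1. Qed.
Lemma LI' s x : S s -> iota s * inv s * x = x.
Proof. by move=> hs; rewrite invR // mul1r. Qed.

Lemma inv_G d s y : S s -> ncF d y -> G d (inv s * iota y).
Proof.
move=> hs.
suff H : forall n d y, (N - d <= n)%N -> ncF d y -> G d (inv s * iota y).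
  by apply: (H (N - d)%N).
elim=> [|n IH] {}d {}y hd hy.
  have hNd : (N <= d)%N by lia.
  by rewrite (hN hNd hy) rmorph0 mulr0; apply: G_zero.
have hz : ncF d.+1 (y * s - s * y).
  by rewrite -opprB; apply: F_opp; apply: F_comm.
have E : inv s * iota y = iota y * inv s + inv s * iota (y * s - s * y) * inv s.
  rewrite rmorphB !rmorphM mulrBr mulrBl !mulrA !RI // !LI //.
  by rewrite addrC subrK.
rewrite E; apply: G_add; first exact: G_gen.
apply: G_mulr; apply: G_mono (IH _ _ _ hz) _ => //; lia.
Qed.

Lemma G_mull d b x : G d x -> G d (b * x).
Proof.
have [a [s [hs ->]]] := all_frac b.
elim=> [y c hy| |u w _ Hu _ Hw].
- rewrite mulrA -(mulrA _ (inv s)); apply: G_mulr; apply: G_mull_iota; exact: inv_G.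
- by rewrite mulr0; apply: G_zero.
- by rewrite mulrDr; apply: G_add.
Qed.

Lemma G_mul_aux p q y0 g : ncF p y0 -> G q g -> G (p + q) (iota y0 * g).
Proof.
move=> hy0; elim=> [z c hz| |u w _ Hu _ Hw].
- by rewrite mulrA -rmorphM; apply: G_gen; apply: F_mul.
- by rewrite mulr0; apply: G_zero.
- by rewrite mulrDr; apply: G_add.
Qed.

Lemma G_mul p q x y : G p x -> G q y -> G (p + q) (x * y).
Proof.
move=> hx hy; elim: hx => [y0 c hy0| |u w _ Hu _ Hw].
- by rewrite -mulrA; apply: G_mul_aux => //; apply: G_mull.
- by rewrite mul0r; apply: G_zero.
- by rewrite mulrDl; apply: G_add.
Qed.

Lemma G5 b q y : ncF q y -> G q.+1 (b * iota y - iota y * b).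
Proof.
move=> hy; have [a [s [hs ->]]] := all_frac b.
have hz : ncF q.+1 (y * s - s * y).
  by rewrite -opprB; apply: F_opp; apply: F_comm.
have E : iota a * inv s * iota y - iota y * (iota a * inv s) =
   iota a * (inv s * iota (y * s - s * y) * inv s) + iota (a * y - y * a) * inv s.
  rewrite !rmorphB !rmorphM !mulrBr !mulrBl !mulrA !RI // !LI //.
  by rewrite mulrBr !mulrA addrA subrK.
rewrite E; apply: G_add.
- by apply: G_mull_iota; apply: G_mulr; apply: inv_G.
- by apply: G_gen; apply: F_comm.
Qed.

Lemma G6 b b' : G 1 (b * b' - b' * b).
Proof.
have [a [s [hs ->]]] := all_frac b'.
have E : b * (iota a * inv s) - iota a * inv s * b =
  (b * iota a - iota a * b) * inv s +
  iota a * (inv s * (- (b * iota s - iota s * b)) * inv s).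
  rewrite opprB !mulrBr !mulrBl !mulrA !RI // !LI //.
  by rewrite mulrBr !mulrA addrA subrK.
rewrite E; apply: G_add.
- by apply: G_mulr; apply: G5; apply: F0.
- apply: G_mull; apply: G_mulr; apply: G_mull; apply: G_opp; apply: G5; apply: F0.
Qed.

Lemma G7 b q g : G q g -> G q.+1 (b * g - g * b).
Proof.
elim=> [y c hy| |u w _ Hu _ Hw].
- have -> : b * (iota y * c) - iota y * c * b =
      (b * iota y - iota y * b) * c + iota y * (b * c - c * b).
    by rewrite mulrBl mulrBr !mulrA addrA subrK.
  apply: G_add; first by apply: G_mulr; apply: G5.
  by rewrite -addn1; apply: G_mul; [apply: G_iota|apply: G6].
- by rewrite mulr0 mul0r subrr; apply: G_zero.
- by rewrite mulrDr mulrDl opprD addrACA; apply: G_add.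
Qed.


Lemma lie_G i x : lie_term i x -> G i.-1 x.
Proof.
elim=> [a|m a b hb IH|m|m u w hu IHu hw IHw] /=.
- by rewrite -[a]mul1r -(rmorph1 iota); apply: G_gen; apply: F0.
- exact: G7.
- exact: G_zero.
- exact: G_add.
Qed.

Lemma valid_size (T : algType CC) (s : seq (nat * T * T)) :
  valid s -> (size s <= \sum_(u <- s) u.1.1)%N.
Proof.
elim: s => [|u s' IHs] vs; first by rewrite big_nil.
rewrite big_cons /=; have [u0 _] := vs u (or_introl erefl).
have := IHs (fun w hw => vs w (or_intror hw)); lia.
Qed.

Lemma word_G a0 s e : valid s -> (\sum_(t <- s) t.1.1)%N = (e + size s)%N ->
  G e (nc_word a0 s).
Proof.
elim/last_ind: s e => [|s t IH] e v es.
  rewrite big_nil /= in es; have -> : e = 0%N by lia.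
  by rewrite -[a0]mul1r -(rmorph1 iota); apply: G_gen; apply: F0.
move/valid_rcons: v => [v [t0 tl]].
have hes := valid_size v.
rewrite sum_rcons size_rcons in es.
rewrite word_rcons.
have -> : e = ((\sum_(u <- s) u.1.1 - size s) + t.1.1.-1)%N.
  by move: es hes t0; case: (t.1.1) => //= n; lia.
apply: G_mulr; apply: G_mul; last exact: lie_G.
by apply: IH => //; rewrite subnK.
Qed.

Lemma F_G d x : ncF d x -> G d x.
Proof.
elim=> [y [a0 [s [ne v e ->]]]| |u w _ Hu _ Hw].
- exact: word_G.
- exact: G_zero.
- exact: G_add.
Qed.

Lemma nilB : NC_nilpotent B.
Proof. by exists N => i hi x hx; apply: G_big hi (F_G hx). Qed.

Lemma KER_G e b : G e b -> exists u y, [/\ S u, ncF e y & b * iota u = iota y].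
Proof.
elim=> [y0 c hy0| |b1 b2 _ [u1 [y1 [h1 f1 E1]]] _ [u2 [y2 [h2 f2 E2]]]].
- have [a [s [hs ->]]] := all_frac c.
  exists s, (y0 * a); split => //; first exact: F_mulr.
  by rewrite !mulrA RI' // rmorphM.
- by exists 1, 0; split => //; [exact: ncF_zero | rewrite mul0r rmorph0].
- have [q [p [hp E]]] := ore u2 h1.
  have hw : S (u1 * q) by rewrite -E; apply: Sm.
  exists (u1 * q), (y1 * q + y2 * p); split => //.
  + by apply: ncF_add; apply: F_mulr.
  + rewrite mulrDl {2}(_ : u1 * q = u2 * p) // !rmorphM !mulrA E1 E2.
    by rewrite -!rmorphM rmorphD.
Qed.

Definition phi (m s : A) : B := inv s * iota m.

Lemma coreL d m m' s s' : ncF d m -> ncF d m' -> S s -> S s' ->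
  G d.+1 (iota s * iota s' * (phi m s - phi m' s') - iota (s' * m - s * m')).
Proof.
move=> hm hm' hs hs'.
have E : iota s * iota s' * (phi m s - phi m' s') - iota (s' * m - s * m') =
  iota s * (iota s' * (inv s * iota m) - inv s * iota m * iota s')
  - (iota s' * iota m - iota m * iota s').
  rewrite /phi rmorphB !rmorphM !mulrBr !mulrA !RI // !LI' //.
  by rewrite !opprB !addrA !subrK.
rewrite E; apply: G_sub.
- apply: G_mull_iota; apply: G7; apply: G_mull; exact: G_iota.
- apply: G7; exact: G_iota.
Qed.

Lemma P2fw d m s m' s' : ncF d m -> S s -> ncF d m' -> S s' ->
  (exists t, S t /\ ncF (d.+1) (t * (s' * m - s * m'))) ->
  ncF (d.+1) (phi m s - phi m' s').
Proof.
move=> hm hs hm' hs' [t [ht hz]].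
apply: G_ncF.
set D := phi m s - phi m' s'.
have H1 : G d.+1 (iota t * (iota s * iota s' * D)).
  rewrite -[iota s * iota s' * D](subrK (iota (s' * m - s * m'))) mulrDr.
  apply: G_add; first by apply: G_mull_iota; apply: coreL.
  by rewrite -rmorphM; apply: G_iota.
have hts : S (t * s * s') by apply: Sm => //; apply: Sm.
rewrite -[D](LI _ hts) -mulrA.
by apply: G_mull; rewrite !rmorphM -!mulrA; rewrite !mulrA in H1 *.
Qed.

Lemma P2bw d m s m' s' : ncF d m -> S s -> ncF d m' -> S s' ->
  ncF (d.+1) (phi m s - phi m' s') ->
  (exists t, S t /\ ncF (d.+1) (t * (s' * m - s * m'))).
Proof.
move=> hm hs hm' hs' hD.
set z := s' * m - s * m'.
have hz : ncF d z by apply: F_sub; apply: F_mull.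
have Hz : G d.+1 (iota z).
  set X := iota s * iota s' * (phi m s - phi m' s').
  have -> : iota z = X - (X - iota z) by rewrite opprB addrC subrK.
  apply: G_sub; last exact: coreL.
  by rewrite /X -mulrA; apply: G_mull; apply: G_mull; apply: F_G.
have [u [y [hu hy E]]] := KER_G Hz.
have [t' [ht' T]] : exists t', S t' /\ (z * u - y) * t' = 0.
  by apply: kerB; rewrite rmorphB rmorphM E subrr.
have hv : S (u * t') by apply: Sm.
exists (u * t'); split => //.
have hzv : ncF d.+1 (z * (u * t')).
  move/eqP: T; rewrite mulrBl subr_eq0 => /eqP T.
  by rewrite mulrA T; apply: F_mulr.
rewrite -[_ * z](subrK (z * (u * t'))); apply: ncF_add => //.
exact: F_comm.
Qed.

Lemma P4add d m s m' s' : ncF d m -> S s -> ncF d m' -> S s' ->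
  ncF (d.+1) (phi (s' * m + s * m') (s * s') - (phi m s + phi m' s')).
Proof.
move=> hm hs hm' hs'; apply: G_ncF.
set h := inv s * iota m.
have E : phi (s' * m + s * m') (s * s') - (phi m s + phi m' s') =
   inv s' * inv s * (iota s' * iota m - iota m * iota s') +
   (inv s' * h - h * inv s') * iota s'.
  rewrite /phi /h inv_prod // rmorphD !rmorphM mulrDr !mulrA !RI' //.
  rewrite !mulrBr !mulrBl !mulrA !RI' //.
  by rewrite opprD addrACA subrr addr0 addrA subrK.
rewrite E; apply: G_add.
- apply: G_mull; apply: G7; exact: G_iota.
- apply: G_mulr; apply: G7; apply: G_mull; exact: G_iota.
Qed.

Lemma P5lin d r m s : ncF d m -> S s -> ncF (d.+1) (phi (r * m) s - iota r * phi m s).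
Proof.
move=> hm hs; apply: G_ncF.
have -> : phi (r * m) s - iota r * phi m s = (inv s * iota r - iota r * inv s) * iota m.
  by rewrite /phi rmorphM mulrBl !mulrA.
rewrite -add1n; apply: G_mul; first by apply: G5; apply: F0.
exact: G_iota.
Qed.

Lemma P3surj d y : ncF d y -> exists m s, [/\ ncF d m, S s & ncF (d.+1) (phi m s - y)].
Proof.
move/F_G; elim=> [y0 c hy0| |y1 y2 _ [m1 [s1 [hm1 hs1 e1]]] _ [m2 [s2 [hm2 hs2 e2]]]].
- have [a [s [hs ->]]] := all_frac c.
  exists (y0 * a), s; split => //; first exact: F_mulr.
  apply: G_ncF; rewrite /phi !mulrA -rmorphM; apply: G7; apply: G_iota; exact: F_mulr.
- by exists 0, 1; split => //; [exact: ncF_zero | rewrite /phi rmorph0 mulr0 subr0; exact: ncF_zero].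
- exists (s2 * m1 + s1 * m2), (s1 * s2); split.
  + by apply: ncF_add; apply: F_mull.
  + exact: Sm.
  + rewrite -[phi _ _](subrK (phi m1 s1 + phi m2 s2)) -addrA.
    apply: ncF_add; first exact: P4add.
    by rewrite opprD addrACA; apply: ncF_add.
Qed.

Lemma main_iso d : frac_gr_iso S iota d phi.
Proof.
split.
- by move=> m s hm hs; apply: F_mull; apply: F_morph.
- move=> m s m' s' hm hs hm' hs'; split; first exact: P2fw.
  exact: P2bw.
- exact: P3surj.
- exact: P4add.
- exact: P5lin.
Qed.

End Main.

Theorem theorem2p1p6 (A : algType CC) (S : A -> Prop) (B : algType CC)
    (iota : {lrmorphism A -> B}) :
  NC_nilpotent A ->
  preimage_of_mult_subset_ab S ->
  is_ring_of_fractions S iota ->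
  NC_nilpotent B /\
  (forall d : nat, exists phi : A -> A -> B, frac_gr_iso S iota d phi).
Proof.
move=> [N hN] [_ S1 Sm Sav] hfr.
have S0 : ~ S 0 by move=> h; apply: (Sav 0 h); apply: ncF_zero.
split; first exact: (nilB hN Sm S1 hfr).
move=> d; exists (phi hfr); exact: (main_iso hN Sm S1 S0 hfr d).
Qed.
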